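(* Let $G$ be a graph, $t\in\mathbb N$, and let $I_t=I_t^{(\mathcal P)}(G)$ for $\mathcal P\in\{push,pull,pp\}$. Then, conditional on $I_t$, there exist $m\in\mathbb N$, independent random variables $X_1,\dots,X_m$ and a self-bounding function $f=f^{(\mathcal P)}$ such that $|I_{t+1}|=f(X_1,\dots,X_m)$.
   Context: Rumour spreading protocols on a graph $G$ in synchronous rounds. push: every informed vertex chooses a neighbour independently and uniformly at random (iuar) and informs it. pull: every uninformed vertex chooses a neighbour iuar and becomes informed if that neighbour is informed. push\&pull (pp): every vertex chooses a neighbour iuar and if one of the two is informed both become informed. $I_t^{(\mathcal P)}(G)$ is the set of vertices informed at the beginning of round $t$. A non-negative function $f:X^m\to\mathbb R$ is self-bounding if there exist functions $f_i:X^{m-1}\to\mathbb R$ such that for all $x_1,\dots,x_m\in X$ and all $i$, $0\le f(x_1,\dots,x_m)-f_i(x_1,\dots,x_{i-1},x_{i+1},\dots,x_m)\le1$, and $\sum_{i=1}^m\big(f(x_1,\dots,x_m)-f_i(x_1,\dots,x_{i-1},x_{i+1},\dots,x_m)\big)\le f(x_1,\dots,x_m)$. *)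

(* Defs.v *)
From mathcomp Require Import all_boot all_order all_algebra.
Set Implicit Arguments. Unset Strict Implicit. Unset Printing Implicit Defensive.
Import Order.TTheory GRing.Theory Num.Theory.
Local Open Scope ring_scope.

Inductive protocol := Push | Pull | PushPull.

Section Round.
Variables (R : realFieldType) (V : finType) (e : rel V).

Definition nbhd (v : V) : {set V} := [set w | e v w].

(* Probability that vertex v chooses u in one round: uniform over the
   neighbours of v; an isolated vertex (no choice possible) is modelled as
   "choosing itself", which has no effect in any of the protocols. *)
Definition choice_prob (v u : V) : R :=
  if #|nbhd v| == 0%N then (u == v)%:R
  else (e v u)%:R / #|nbhd v|%:R.

Definition outcome := {ffun V -> V}.

Definition weight (w : outcome) : R := \prod_(v : V) choice_prob v (w v).

Definition prob (A : pred outcome) : R := \sum_(w : outcome | A w) weight w.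

Definition next_informed (P : protocol) (S : {set V}) (w : outcome) : {set V} :=
  match P with
  | Push => S :|: [set u | [exists v in S, w v == u]]
  | Pull => S :|: [set u | w u \in S]
  | PushPull => S :|: [set u | (w u \in S) || [exists v in S, w v == u]]
  end.

Definition mutually_independent (X : finType) (m : nat)
    (Xs : 'I_m -> outcome -> X) : Prop :=
  forall (J : {set 'I_m}) (A : 'I_m -> {set X}),
    prob [pred w | [forall i in J, Xs i w \in A i]]
    = \prod_(i in J) prob [pred w | Xs i w \in A i].

End Round.

(* Self-bounding function f : X^m -> R.  A function f_i of the m-1
   coordinates other than i is represented as a function of all m
   coordinates that does not depend on coordinate i. *)
Definition self_bounding (R : realFieldType) (X : Type) (m : nat)
    (f : ('I_m -> X) -> R) : Prop :=
  (forall x, 0 <= f x) /\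
  exists fi : 'I_m -> ('I_m -> X) -> R,
    (forall i x y, (forall j, j != i -> x j = y j) -> fi i x = fi i y) /\
    (forall x i, 0 <= f x - fi i x <= 1) /\
    (forall x, \sum_(i < m) (f x - fi i x) <= f x).

(* Main.v *)
Require Import Defs.
From mathcomp Require Import all_boot all_order all_algebra.
Import Order.TTheory GRing.Theory Num.Theory.

Section Comb.
Variables (V I : finType) (S : {set V}) (F : I -> {set V}).
Hypothesis Fsmall : forall i, #|F i :\: S| <= 1.
Let A := S :|: \bigcup_i F i.
Let Ai i := S :|: \bigcup_(j | j != i) F j.

Lemma Ai_sub i : Ai i \subset A.
Proof.
apply/subsetP => u; rewrite !inE => /orP[->//|/bigcupP[j _ Hj]].
by apply/orP; right; apply/bigcupP; exists j.
Qed.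

Lemma DAi i u : u \in A :\: Ai i -> u \in F i :\: S.
Proof.
rewrite !inE => /andP[Hn /orP[HS|/bigcupP[j _ Hj]]].
  by rewrite HS in Hn.
case: (eqVneq j i) => [ji|ji]; first by subst j; rewrite Hj andbT; move: Hn; case: (u \in S).
by move: Hn; rewrite (_ : u \in \bigcup_(j0 | j0 != i) F j0) ?orbT //; apply/bigcupP; exists j.
Qed.

Lemma A_le i : #|A| <= #|Ai i| + 1.
Proof.
have H : A \subset Ai i :|: (F i :\: S).
  apply/subsetP => u Hu; rewrite inE; case: (boolP (u \in Ai i)) => //= Hn.
  by apply: DAi; rewrite inE Hn Hu.
apply: leq_trans (subset_leq_card H) _.
by apply: leq_trans (leq_card_setU _ _) _; rewrite leq_add2l.
Qed.

Lemma sum_le : \sum_i (#|A| - #|Ai i|) <= #|A|.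
Proof.
have E i : #|A| - #|Ai i| = \sum_u (u \in A :\: Ai i).
  have -> : #|A| - #|Ai i| = #|A :\: Ai i| by rewrite cardsD (setIidPr (Ai_sub i)).
  rewrite -sum1_card big_mkcond /=.
  by apply: eq_bigr => u _; case: (u \in _).
rewrite (eq_bigr _ (fun i _ => E i)) exchange_big /= -sum1_card [X in _ <= X]big_mkcond /=.
apply: leq_sum => u _.
case: (boolP [exists i, u \in A :\: Ai i]) => [/existsP[i Hi]|Hn].
  rewrite (bigD1 i) //= Hi big1 /=.
    by move: Hi; rewrite in_setD => /andP[_ ->].
  move=> j ji; case: (boolP (u \in A :\: Ai j)) => // Hj; exfalso.
  move: Hi; rewrite inE => /andP[Hi _]; move: Hi; rewrite !inE negb_or => /andP[_ /negP]; apply.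
  apply/bigcupP; exists j => //.
  by have := DAi _ _ Hj; rewrite inE => /andP[].
rewrite big1 // => i _; case: (boolP (u \in A :\: Ai i)) => // Hi; exfalso; move/existsP: Hn; apply; by exists i.
Qed.
End Comb.

Local Open Scope ring_scope.

Section Prob.
Variables (R : realFieldType) (V : finType) (e : rel V).

Lemma sum_cp v : \sum_u choice_prob R e v u = 1.
Proof.
rewrite /choice_prob; case: eqP => H.
  rewrite (bigD1 v) //= eqxx big1 ?addr0 // => u /negbTE -> //.
rewrite -mulr_suml.
have -> : \sum_u ((e v u)%:R : R) = #|nbhd e v|%:R.
  rewrite -sum1_card natr_sum [RHS]big_mkcond /=; apply: eq_bigr => u _.
  by rewrite /nbhd inE; case: (e v u).
by rewrite mulfV // pnatr_eq0; apply/eqP.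
Qed.

Lemma prob_family (B : V -> {set V}) :
  prob R e [pred w : outcome V | [forall v, w v \in B v]] = \prod_v \sum_(u in B v) choice_prob R e v u.
Proof.
rewrite bigA_distr_big_dep /prob /weight; apply: eq_bigl => w /=.
by apply/forallP/familyP.
Qed.

Lemma prob_J (J : {set 'I_#|V|}) (A : 'I_#|V| -> {set V}) :
  prob R e [pred w : outcome V | [forall i in J, w (enum_val i) \in A i]]
  = \prod_(i in J) \sum_(u in A i) choice_prob R e (enum_val i) u.
Proof.
pose B v := if enum_rank v \in J then A (enum_rank v) else setT.
have -> : prob R e [pred w : outcome V | [forall i in J, w (enum_val i) \in A i]]
   = prob R e [pred w : outcome V | [forall v, w v \in B v]].
  apply: eq_bigl => w /=; apply/forall_inP/forallP => H.
    move=> v; rewrite /B; case: ifP => Hv; last by rewrite inE.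
    by have := H _ Hv; rewrite enum_rankK.
  move=> i Hi; have := H (enum_val i); by rewrite /B enum_valK Hi.
rewrite prob_family (bigID (fun v => enum_rank v \in J)) /=.
rewrite [X in _ * X]big1 ?mulr1; last first.
  move=> v /negbTE Hv; rewrite /B Hv; rewrite -(sum_cp v); apply: eq_bigl => u; by rewrite inE.
rewrite (reindex (@enum_val _ V)) /=; last first.
  by exists (@enum_rank _) => x _; rewrite ?enum_valK ?enum_rankK.
apply: eq_big => i; first by rewrite enum_valK.
by rewrite /B enum_valK => ->.
Qed.
End Prob.

Definition contrib (V : finType) (P : protocol) (S : {set V}) (v x : V) : {set V} :=
  match P with
  | Push => if v \in S then [set x] else set0
  | Pull => if x \in S then [set v] else set0
  | PushPull => (if v \in S then [set x] else set0) :|: (if x \in S then [set v] else set0)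
  end.

Arguments contrib {V}.

Lemma contrib_small (V : finType) (P : protocol) (S : {set V}) v x : (#|contrib P S v x :\: S| <= 1)%N.
Proof.
have H1 (y : V) : (#|[set y] :\: S| <= 1)%N.
  by apply: leq_trans (subset_leq_card (subsetDl _ _)) _; rewrite cards1.
case: P => /=.
- by case: (v \in S) => //; rewrite set0D cards0.
- by case: (x \in S) => //; rewrite set0D cards0.
case: (boolP (v \in S)) => Hv; case: (boolP (x \in S)) => Hx;
  rewrite ?setU0 ?set0U ?set0D ?cards0 //.
have -> : ([set x] :|: [set v]) :\: S = [set x] :\: S.
  apply/setP => u; rewrite !inE; case: (eqVneq u v) => [->|uv]; first by rewrite Hv.
  by rewrite orbF.
by [].
Qed.

Lemma next_eq (V : finType) (P : protocol) (S : {set V}) (w : outcome V) :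
  next_informed P S w = S :|: \bigcup_v contrib P S v (w v).
Proof.
apply/setP => u; case: P => /=; rewrite !inE; congr (_ || _); apply/idP/bigcupP.
- by case/existsP => v /andP[Hv /eqP <-]; exists v => //; rewrite Hv inE.
- by move=> [v _]; case: ifP => Hv; rewrite inE // => /eqP ->; apply/existsP; exists v; rewrite Hv eqxx.
- by move=> Hu; exists u => //; rewrite Hu inE.
- by move=> [v _]; case: ifP => Hv; rewrite inE // => /eqP ->.
- case/orP => [Hu|/existsP[v /andP[Hv /eqP <-]]].
    by exists u => //; rewrite Hu !inE eqxx orbT.
  by exists v => //; rewrite Hv !inE eqxx.
- move=> [v _]; rewrite inE; case/orP; case: ifP => Hv; rewrite inE // => /eqP ->.
    by apply/orP; right; apply/existsP; exists v; rewrite Hv eqxx.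
  by rewrite Hv.
Qed.

Theorem lemma2p4 (R : realFieldType) (V : finType) (e : rel V)
    (e_sym : symmetric e) (e_irr : irreflexive e)
    (P : protocol) (S : {set V}) :
  exists (m : nat) (X : finType) (Xs : 'I_m -> outcome V -> X)
         (f : ('I_m -> X) -> R),
    mutually_independent R e Xs /\ self_bounding f /\
    forall w : outcome V, #|next_informed P S w|%:R = f (fun i => Xs i w).
Proof.
pose F (x : 'I_#|V| -> V) i := contrib P S (enum_val i) (x i).
exists #|V|, V, (fun i w => w (enum_val i)),
  (fun x => #|S :|: \bigcup_i F x i|%:R).
split; last split.
- move=> J A; rewrite prob_J; apply: eq_bigr => i _.
  have -> : \sum_(u in A i) choice_prob R e (enum_val i) u = \prod_(j in [set i]) \sum_(u in A j) choice_prob R e (enum_val j) u by rewrite big_set1.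
  rewrite -prob_J; apply: eq_bigl => w /=.
  apply/forall_inP/idP => [H|H j]; last by rewrite inE => /eqP ->.
  by apply: H; rewrite inE.
- split=> [x|]; first by rewrite ler0n.
  exists (fun i x => #|S :|: \bigcup_(j | j != i) F x j|%:R).
  split; last split.
  + move=> i x y H; congr (_%:R); congr (#|_|); congr (_ :|: _).
    by apply: eq_bigr => j ji; rewrite /F H.
  + move=> x i; rewrite -natrB; last by apply: subset_leq_card; apply: Ai_sub.
    rewrite ler0n /= -[1]/(1%:R) ler_nat leq_subLR.
    exact: (A_le _ _ S (F x) (fun j => contrib_small _ P S _ _) i).
  + move=> x; rewrite -(eq_bigr _ (fun i _ => natrB _ (subset_leq_card (Ai_sub _ _ S (F x) i)))).
    rewrite -natr_sum ler_nat.
    exact: sum_le.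
- move=> w; rewrite next_eq; congr (#|_|%:R); congr (_ :|: _).
  rewrite (reindex (@enum_val _ V)) //=.
  by exists (@enum_rank _) => x _; rewrite ?enum_valK ?enum_rankK.
Qed.
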